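(* Let $\Re$ be a commutative Krasner hyperring with identity $1\ne0$, $\phi:L(\Re)\to L(\Re)\cup\{\emptyset\}$ a function, and $T$ a proper $\phi$-primary hyperideal of $\Re$. (i) If $M$ is a hyperideal of $\Re$ with $M\subseteq T$, then $T/M$ is a $\phi_M$-primary hyperideal of $\Re/M$. (ii) If $S$ is a multiplicatively closed subset of $\Re$ with $T\cap S=\emptyset$ and $\phi(T)_S\subseteq\phi_S(T_S)$, then $T_S$ is a $\phi_S$-primary hyperideal of $\Re_S$.
   Context: Krasner hyperring: $(\Re,\oplus)$ canonical hypergroup, $(\Re,\circ)$ commutative semigroup with identity $1\ne0$, $0$ absorbing, distributive. For a hyperideal $M$, $\Re/M=\{a\oplus M\}$ is the quotient hyperring, $N/M=\{a\oplus M: a\in N\}$ for $N\supseteq M$, and $\phi_M(N/M)=(\phi(N)\oplus M)/M$ (or $\emptyset$ if $\phi(N)=\emptyset$). For multiplicatively closed $S$, $\Re_S$ is the localization, $N_S=\{a/s:a\in N,s\in S\}$, and for $J\in L(\Re_S)$, $\phi_S(J)=(\phi(J\cap\Re))_S$ where $J\cap\Re=\{a: a/1\in J\}$ ($\emptyset$ if $\phi(J\cap\Re)=\emptyset$). $N$ is $\psi$-primary if $a\circ b\in N$, $a\circ b\notin\psi(N)$ imply $a\in N$ or $b^k\in N$ for some $k\in\mathbb{N}$. *)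

(* Defs.v *)
(* Elements of quotient/localized hyperrings are
   genuine equivalence classes (subsets), representatives are picked with
   ClassicalEpsilon (the operations do not depend on the choice). *)
From Stdlib Require Import ClassicalEpsilon Arith.

Set Implicit Arguments.

(* A hyperring signature: carrier, hyperaddition (hadd a b c  <->  c \in a (+) b),
   multiplication, 0, 1, additive inverse. *)
Record hsig := HSig {
  car :> Type;
  hadd : car -> car -> car -> Prop;
  hmul : car -> car -> car;
  hzero : car;
  hone : car;
  hneg : car -> car
}.

Arguments hadd {h}.
Arguments hmul {h}.
Arguments hzero {h}.
Arguments hone {h}.
Arguments hneg {h}.

Record is_krasner (R : hsig) : Prop := {
  hadd_nonempty : forall a b : R, exists c, hadd a b c;
  hadd_assoc : forall a b c x : R,
      (exists y, hadd a b y /\ hadd y c x) <-> (exists y, hadd b c y /\ hadd a y x);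
  hadd_comm : forall a b x : R, hadd a b x <-> hadd b a x;
  hadd_zero : forall a x : R, hadd a hzero x <-> x = a;
  hneg_spec : forall a : R, hadd a (hneg a) hzero;
  hneg_unique : forall a b : R, hadd a b hzero -> b = hneg a;
  hadd_rev : forall a b c : R, hadd a b c -> hadd c (hneg b) a /\ hadd (hneg a) c b;
  hmul_assoc : forall a b c : R, hmul a (hmul b c) = hmul (hmul a b) c;
  hmul_comm : forall a b : R, hmul a b = hmul b a;
  hmul_one : forall a : R, hmul hone a = a;
  hone_neq_zero : (hone : R) <> hzero;
  hmul_zero : forall a : R, hmul hzero a = hzero;
  hmul_distr : forall a b c x : R,
      hadd (hmul a b) (hmul a c) x <-> exists y, hadd b c y /\ x = hmul a y
}.

Section Generic.
Variable R : hsig.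

Definition hyperideal (I : R -> Prop) : Prop :=
  (exists x, I x) /\
  (forall a b x, I a -> I b -> hadd a (hneg b) x -> I x) /\
  (forall r a, I a -> I (hmul r a)).

Definition proper (I : R -> Prop) : Prop := exists x, ~ I x.

Fixpoint hpow (b : R) (k : nat) : R :=
  match k with 0 => hone | S k' => hmul b (hpow b k') end.

(* psi-primary hyperideal; psi : L(R) -> L(R) \cup {emptyset}, the empty set
   being represented by the empty predicate. *)
Definition psi_primary (psi : (R -> Prop) -> (R -> Prop)) (N : R -> Prop) : Prop :=
  hyperideal N /\
  forall a b : R, N (hmul a b) -> ~ psi N (hmul a b) ->
    N a \/ exists k, 0 < k /\ N (hpow b k).

Definition setadd (A B : R -> Prop) : R -> Prop :=
  fun x => exists a b, A a /\ B b /\ hadd a b x.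

Definition phi_fun (phi : (R -> Prop) -> (R -> Prop)) : Prop :=
  forall N, hyperideal N -> hyperideal (phi N) \/ (forall x, ~ phi N x).

End Generic.

Section Quotient.
Variables (R : hsig) (M : R -> Prop).

Definition coset (a : R) : R -> Prop := fun x => exists m, M m /\ hadd a m x.

Definition qcar : Type := {X : R -> Prop | exists a, X = coset a}.

Definition qmk (a : R) : qcar := exist _ (coset a) (ex_intro _ a eq_refl).

Definition qrep (X : qcar) : R :=
  proj1_sig (constructive_indefinite_description _ (proj2_sig X)).

Definition quot : hsig :=
  @HSig qcar
    (fun X Y Z => exists c, hadd (qrep X) (qrep Y) c /\ Z = qmk c)
    (fun X Y => qmk (hmul (qrep X) (qrep Y)))
    (qmk hzero) (qmk hone) (fun X => qmk (hneg (qrep X))).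

Definition qset (N : R -> Prop) : quot -> Prop := fun X => exists a, N a /\ X = qmk a.

(* phi_M (N/M) = (phi(N) (+) M)/M; for J in L(R/M), J = N/M with
   N = {a | a (+) M in J}. *)
Definition phiM (phi : (R -> Prop) -> (R -> Prop)) (J : quot -> Prop) : quot -> Prop :=
  qset (@setadd R (phi (fun a => J (qmk a))) M).

End Quotient.

Record mclosed (R : hsig) := MClosed {
  mset :> R -> Prop;
  mset_one : mset hone;
  mset_mul : forall s t, mset s -> mset t -> mset (hmul s t)
}.

Section Localization.
Variables (R : hsig) (S : mclosed R).

Definition lcls (a s : R) : R * R -> Prop :=
  fun p => S (snd p) /\ exists u, S u /\ hmul u (hmul a (snd p)) = hmul u (hmul (fst p) s).

Definition lcar : Type :=
  {X : R * R -> Prop | exists p : R * R, S (snd p) /\ X = lcls (fst p) (snd p)}.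

Definition lmk (a s : R) (Hs : S s) : lcar :=
  exist _ (lcls a s) (ex_intro _ (a, s) (conj Hs eq_refl)).

Definition lrep (X : lcar) :=
  constructive_indefinite_description _ (proj2_sig X).

Definition lnum (X : lcar) : R := fst (proj1_sig (lrep X)).
Definition lden (X : lcar) : R := snd (proj1_sig (lrep X)).
Definition lden_in (X : lcar) : S (lden X) := proj1 (proj2_sig (lrep X)).

Definition loc : hsig :=
  @HSig lcar
    (fun X Y Z => exists c, hadd (hmul (lnum X) (lden Y)) (hmul (lnum Y) (lden X)) c /\
                  Z = lmk c _ (mset_mul S _ _ (lden_in X) (lden_in Y)))
    (fun X Y => lmk (hmul (lnum X) (lnum Y)) _ (mset_mul S _ _ (lden_in X) (lden_in Y)))
    (lmk hzero _ (mset_one S)) (lmk hone _ (mset_one S))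
    (fun X => lmk (hneg (lnum X)) _ (lden_in X)).

Definition lset (N : R -> Prop) : loc -> Prop :=
  fun X => exists a s (Hs : S s), N a /\ X = lmk a s Hs.

Definition lcontr (J : loc -> Prop) : R -> Prop := fun a => J (lmk a _ (mset_one S)).

Definition phiS (phi : (R -> Prop) -> (R -> Prop)) (J : loc -> Prop) : loc -> Prop :=
  lset (phi (lcontr J)).

End Localization.

(* Main.v *)
Require Import Defs.
From Stdlib Require Import ClassicalEpsilon Arith List Permutation.
Import ListNotations.
Set Implicit Arguments.

Inductive mt (A : Type) := Leaf (x : A) | One | Node (a b : mt A).
Arguments Leaf {A}. Arguments One {A}. Arguments Node {A}.

Section ACs.
Variables (R : hsig) (HR : is_krasner R).
Fixpoint meval (t : mt R) : R :=
  match t with Leaf x => x | One => hone | Node a b => hmul (meval a) (meval b) end.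
Fixpoint mflat (t : mt R) : list R :=
  match t with Leaf x => [x] | One => [] | Node a b => mflat a ++ mflat b end.
Fixpoint prodl (l : list R) : R :=
  match l with [] => hone | x :: l => hmul x (prodl l) end.
Lemma prodl_app l1 l2 : prodl (l1 ++ l2) = hmul (prodl l1) (prodl l2).
Proof.
  induction l1 as [|x l IH]; simpl. now rewrite (hmul_one HR).
  now rewrite IH, (hmul_assoc HR).
Qed.
Lemma meval_flat t : meval t = prodl (mflat t).
Proof.
  induction t; simpl. rewrite (hmul_comm HR), (hmul_one HR); auto. auto.
  now rewrite prodl_app, IHt1, IHt2.
Qed.
Lemma prodl_perm l1 l2 : Permutation l1 l2 -> prodl l1 = prodl l2.
Proof.
  induction 1; simpl; try congruence.
  rewrite !(hmul_assoc HR), (hmul_comm HR y x); auto.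
Qed.
End ACs.

Ltac reify e :=
  lazymatch e with
  | @hmul ?R ?a ?b => let ta := reify a in let tb := reify b in constr:(@Node R ta tb)
  | @hone ?R => constr:(@One R)
  | _ => constr:(Leaf e)
  end.

Ltac find_split x r :=
  lazymatch r with
  | x :: ?t => let T := type of x in constr:((@nil T, t))
  | ?h :: ?t => let p := find_split x t in
      lazymatch p with (?a, ?b) => constr:((h :: a, b)) end
  end.

Ltac perm_tac :=
  lazymatch goal with
  | |- Permutation nil nil => apply perm_nil
  | |- Permutation (?x :: ?l) ?r =>
      let p := find_split x r in
      lazymatch p with (?l1, ?l2) =>
        change (Permutation (x :: l) (l1 ++ x :: l2));
        apply Permutation_cons_app; cbn [app]; perm_tac end
  end.

Ltac ac HR :=
  lazymatch goal with |- ?l = ?r =>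
    let tl := reify l in let tr := reify r in
    change (meval _ tl = meval _ tr);
    rewrite !(meval_flat HR); apply (prodl_perm HR); cbn [mflat app]; perm_tac
  end.

From Stdlib Require Import FunctionalExtensionality PropExtensionality ProofIrrelevance.

Section Basic.
Variables (R : hsig) (HR : is_krasner R).

Lemma hadd0l (a : R) : hadd hzero a a.
Proof. apply (hadd_comm HR), (hadd_zero HR); auto. Qed.
Lemma hadd0r (a : R) : hadd a hzero a.
Proof. apply (hadd_zero HR); auto. Qed.
Lemma mul0r (a : R) : hmul a hzero = hzero.
Proof. now rewrite (hmul_comm HR), (hmul_zero HR). Qed.
Lemma distr_f (a b c x : R) : hadd b c x -> hadd (hmul a b) (hmul a c) (hmul a x).
Proof. intro H. apply (hmul_distr HR). eauto. Qed.
Lemma mulN (a b : R) : hmul a (hneg b) = hneg (hmul a b).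
Proof.
  apply (hneg_unique HR). rewrite <- (mul0r a). apply distr_f, (hneg_spec HR).
Qed.
Lemma negneg (b : R) : hneg (hneg b) = b.
Proof.
  symmetry. apply (hneg_unique HR). apply (hadd_comm HR), (hneg_spec HR).
Qed.

Variable I : R -> Prop.
Hypothesis HI : hyperideal R I.
Lemma I0 : I hzero.
Proof.
  destruct HI as [[x Hx] [Hs _]]. eapply Hs; eauto. apply (hneg_spec HR).
Qed.
Lemma IN a : I a -> I (hneg a).
Proof.
  intro Ha. destruct HI as [_ [Hs _]]. eapply Hs. apply I0. eauto. apply hadd0l.
Qed.
Lemma IadD a b c : I a -> I b -> hadd a b c -> I c.
Proof.
  intros Ha Hb H. destruct HI as [_ [Hs _]]. eapply Hs. apply Ha. apply IN, Hb.
  now rewrite negneg.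
Qed.
Lemma IM r a : I a -> I (hmul r a).
Proof. destruct HI as [_ [_ Hm]]. auto. Qed.
End Basic.
From Stdlib Require Import Classical.

Section Quot.
Variables (R : hsig) (HR : is_krasner R) (T M : R -> Prop).
Hypotheses (HTi : hyperideal R T) (HM : hyperideal R M) (HMT : forall x, M x -> T x).

Lemma coset_self a : coset R M a a.
Proof. exists hzero. split. apply (I0 HR HM). apply (hadd0r HR). Qed.

Lemma q_rep (Z : quot R M) : Z = qmk R M (qrep Z).
Proof.
  destruct Z as [X HX]. unfold qrep; simpl.
  destruct (constructive_indefinite_description _ HX) as [c Hc]; simpl.
  unfold qmk. subst X. f_equal. apply proof_irrelevance.
Qed.

Lemma qmk_coset a b : qmk R M a = qmk R M b -> coset R M a b.
Proof. intro E. apply (f_equal (@proj1_sig _ _)) in E. simpl in E. rewrite E. apply coset_self. Qed.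

Lemma qmk_T a b : qmk R M a = qmk R M b -> T a -> T b.
Proof.
  intros E Ha. destruct (qmk_coset E) as [m [Hm H]]. exact (IadD HR HTi _ _ _ Ha (HMT Hm) H).
Qed.

Lemma qsetmk a : qset (M:=M) T (qmk R M a) <-> T a.
Proof.
  split. intros [b [Hb E]]. exact (qmk_T (eq_sym E) Hb). intro H; exists a; auto.
Qed.

Lemma qsetT (Z : quot R M) : qset T Z <-> T (qrep Z).
Proof. rewrite (q_rep Z) at 1. apply qsetmk. Qed.

Lemma rep_in c : coset R M c (qrep (qmk R M c)).
Proof. apply qmk_coset. apply q_rep. Qed.

Lemma qpow (Y : quot R M) k :
  exists m, M m /\ hadd (hpow R (qrep Y) k) m (qrep (hpow (quot R M) Y k)).
Proof.
  induction k as [|k [m [Hm Hz]]].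
  - exact (rep_in hone).
  - destruct (rep_in (hmul (qrep Y) (qrep (hpow (quot R M) Y k)))) as [m' [Hm' H']].
    pose proof (distr_f HR (qrep Y) _ _ _ Hz) as Hd.
    assert (Ha : exists y0, hadd (hmul (qrep Y) (hpow R (qrep Y) k)) (hmul (qrep Y) m) y0
                      /\ hadd y0 m' (qrep (hpow (quot R M) Y (S k)))) by eauto.
    apply (hadd_assoc HR) in Ha. destruct Ha as [w [Hw1 Hw2]].
    exists w. split; [|exact Hw2].
    eapply (IadD HR HM); [apply (IM HM); exact Hm | exact Hm' | exact Hw1].
Qed.

Variable phi : (R -> Prop) -> (R -> Prop).
Hypothesis HT : psi_primary R phi T.

Lemma part1 : psi_primary (quot R M) (phiM phi) (qset T).
Proof.
  split.
  - split; [|split].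
    + destruct HTi as [[a Ha] _]. exists (qmk R M a). now apply qsetmk.
    + intros X Y Z HX HY [c [Hc E]]. subst Z. apply qsetmk.
      rewrite qsetT in HX, HY.
      eapply (IadD HR HTi); [exact HX| |exact Hc].
      apply qsetT, qsetmk, (IN HR HTi), HY.
    + intros r A HA. change (qset T (qmk R M (hmul (qrep r) (qrep A)))).
      apply qsetmk, (IM HTi). now apply qsetT.
  - intros X Y Hxy Hn.
    change (qset T (qmk R M (hmul (qrep X) (qrep Y)))) in Hxy.
    apply qsetmk in Hxy.
    destruct (classic (phi T (hmul (qrep X) (qrep Y)))) as [Hp|Hp].
    + exfalso. apply Hn.
      assert (E : (fun a => qset (M:=M) T (qmk R M a)) = T).
      { extensionality a. apply propositional_extensionality. apply qsetmk. }
      unfold phiM. rewrite E.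
      exists (hmul (qrep X) (qrep Y)). split; [|reflexivity].
      exists (hmul (qrep X) (qrep Y)), hzero. split; [exact Hp|]. split.
      apply (I0 HR HM). apply (hadd0r HR).
    + destruct (proj2 HT _ _ Hxy Hp) as [Hx | [k [Hk Hyk]]].
      * left. now apply qsetT.
      * right. exists k. split; [exact Hk|]. apply qsetT.
        destruct (qpow Y k) as [m [Hm H]].
        eapply (IadD HR HTi); [exact Hyk | apply HMT, Hm | exact H].
Qed.
End Quot.

Section Loc.
Variables (R : hsig) (HR : is_krasner R) (T : R -> Prop) (S : mclosed R).
Hypotheses (HTi : hyperideal R T) (HTS : forall x, ~ (T x /\ S x)).

Definition lrel (a s b t : R) := exists u, S u /\ hmul u (hmul a t) = hmul u (hmul b s).

Lemma lrel_refl a s : lrel a s a s.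
Proof. exists hone. split. apply mset_one. reflexivity. Qed.
Lemma lrel_sym a s b t : lrel a s b t -> lrel b t a s.
Proof. intros [u [Hu E]]. exists u. auto. Qed.
Lemma lrel_trans a s b t c r : S t -> lrel a s b t -> lrel b t c r -> lrel a s c r.
Proof.
  intros Ht [u [Hu E1]] [v [Hv E2]]. exists (hmul u (hmul v t)). split.
  apply mset_mul; auto. apply mset_mul; auto.
  transitivity (hmul (hmul v r) (hmul u (hmul a t))). ac HR. rewrite E1.
  transitivity (hmul (hmul u s) (hmul v (hmul b r))). ac HR. rewrite E2. ac HR.
Qed.
Lemma lrel_mul a s a' s' b t b' t' :
  lrel a s a' s' -> lrel b t b' t' -> lrel (hmul a b) (hmul s t) (hmul a' b') (hmul s' t').
Proof.
  intros [u [Hu E1]] [v [Hv E2]]. exists (hmul u v). split. apply mset_mul; auto.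
  transitivity (hmul (hmul u (hmul a s')) (hmul v (hmul b t'))). ac HR.
  rewrite E1, E2. ac HR.
Qed.

Lemma lcls_eq a s b t : S s -> S t -> lrel a s b t -> lcls S a s = lcls S b t.
Proof.
  intros Hs Ht H. extensionality p. apply propositional_extensionality.
  unfold lcls. split; intros [Hp H']; split; auto.
  - exact (lrel_trans Hs (lrel_sym H) H').
  - exact (lrel_trans Ht H H').
Qed.

Lemma lmk_eq a s b t Hs Ht : lrel a s b t -> lmk S a s Hs = lmk S b t Ht.
Proof.
  intro H. apply eq_sig_hprop. intros; apply proof_irrelevance.
  simpl. now apply lcls_eq.
Qed.

Lemma lmk_rel a s b t Hs Ht : lmk S a s Hs = lmk S b t Ht -> lrel a s b t.
Proof.
  intro E. apply (f_equal (@proj1_sig _ _)) in E. simpl in E.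
  assert (H : lcls S b t (b, t)) by (split; [exact Ht| apply lrel_refl]).
  rewrite <- E in H. destruct H as [_ H]. exact H.
Qed.

Lemma l_rep (X : loc S) : X = lmk S (lnum X) (lden X) (lden_in X).
Proof.
  destruct X as [X HX]. unfold lnum, lden, lden_in, lrep; simpl.
  destruct (constructive_indefinite_description _ HX) as [[a s] [Hs E]]; simpl.
  apply eq_sig_hprop. intros; apply proof_irrelevance. simpl. exact E.
Qed.

Lemma lrel_rep (X : loc S) a s Hs : X = lmk S a s Hs -> lrel a s (lnum X) (lden X).
Proof. intro E. apply (lmk_rel (Hs := Hs) (Ht := lden_in X)). rewrite <- E. apply l_rep. Qed.

Lemma lset_mk a s Hs : lset T (lmk S a s Hs) <-> exists u, S u /\ T (hmul u a).
Proof.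
  split.
  - intros [b [t [Ht [Tb E]]]]. destruct (lmk_rel E) as [w [Hw Ew]].
    exists (hmul w t). split. apply mset_mul; auto.
    replace (hmul (hmul w t) a) with (hmul w (hmul a t)) by ac HR.
    rewrite Ew. replace (hmul w (hmul b s)) with (hmul (hmul w s) b) by ac HR.
    apply (IM HTi); auto.
  - intros [u [Su Tu]]. exists (hmul u a), (hmul u s), (mset_mul S _ _ Su Hs).
    split; auto. apply lmk_eq. exists hone. split. apply mset_one. ac HR.
Qed.

Lemma lsetX (X : loc S) : lset T X <-> exists u, S u /\ T (hmul u (lnum X)).
Proof. rewrite (l_rep X) at 1. apply lset_mk. Qed.

Lemma hpow_mul a b k : hpow R (hmul a b) k = hmul (hpow R a k) (hpow R b k).
Proof. induction k; simpl. now rewrite (hmul_one HR). rewrite IHk. ac HR. Qed.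

Lemma S_pow u k : S u -> S (hpow R u k).
Proof. intro Hu. induction k; simpl. apply mset_one. apply mset_mul; auto. Qed.

Lemma lpow (Y : loc S) k :
  hpow (loc S) Y k = lmk S (hpow R (lnum Y) k) (hpow R (lden Y) k) (S_pow (lden Y) k (lden_in Y)).
Proof.
  induction k.
  - apply lmk_eq. apply lrel_refl.
  - change (lmk S (hmul (lnum Y) (lnum (hpow (loc S) Y k)))
             (hmul (lden Y) (lden (hpow (loc S) Y k)))
             (mset_mul S _ _ (lden_in Y) (lden_in (hpow (loc S) Y k)))
            = lmk S (hmul (lnum Y) (hpow R (lnum Y) k)) (hmul (lden Y) (hpow R (lden Y) k))
                (S_pow (lden Y) (Datatypes.S k) (lden_in Y))).
    apply lmk_eq. apply lrel_mul. apply lrel_refl.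
    apply lrel_sym. eapply lrel_rep. exact IHk.
Qed.

Variable phi : (R -> Prop) -> (R -> Prop).
Hypothesis HT : psi_primary R phi T.
Hypothesis Hsub : forall X, lset (S:=S) (phi T) X -> phiS phi (lset T) X.

Lemma part2 : psi_primary (loc S) (phiS phi) (lset T).
Proof.
  split.
  - split; [|split].
    + destruct HTi as [[a Ha] _]. exists (lmk S a hone (mset_one S)).
      exists a, hone, (mset_one S). auto.
    + intros X Y Z HX HY [c [Hc E]]. subst Z. apply lset_mk.
      apply lsetX in HX. destruct HX as [u [Su Tu]].
      apply lsetX in HY. destruct HY as [v [Sv Tv]].
      pose (nY := lmk S (hneg (lnum Y)) (lden Y) (lden_in Y)).
      change (hadd (hmul (lnum X) (lden nY)) (hmul (lnum nY) (lden X)) c) in Hc.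
      destruct (lrel_rep (X := nY) eq_refl) as [w [Sw Ew]].
      exists (hmul u (hmul v (hmul w (lden Y)))). split.
      { repeat apply mset_mul; auto. apply lden_in. }
      eapply (IadD HR HTi); [| | apply (distr_f HR _ _ _ _ Hc)].
      * replace (hmul (hmul u (hmul v (hmul w (lden Y)))) (hmul (lnum X) (lden nY)))
          with (hmul (hmul v (hmul w (hmul (lden Y) (lden nY)))) (hmul u (lnum X))) by ac HR.
        apply (IM HTi); auto.
      * replace (hmul (hmul u (hmul v (hmul w (lden Y)))) (hmul (lnum nY) (lden X)))
          with (hmul (hmul u (hmul v (lden X))) (hmul w (hmul (lnum nY) (lden Y)))) by ac HR.
        rewrite <- Ew.
        replace (hmul (hmul u (hmul v (lden X))) (hmul w (hmul (hneg (lnum Y)) (lden nY))))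
          with (hmul (hmul u (hmul (lden X) (hmul w (lden nY)))) (hmul v (hneg (lnum Y)))) by ac HR.
        rewrite (mulN HR). apply (IM HTi), (IN HR HTi); auto.
    + intros r A HA. apply lsetX in HA. destruct HA as [u [Su Tu]].
      change (lset T (lmk S (hmul (lnum r) (lnum A)) _ (mset_mul S _ _ (lden_in r) (lden_in A)))).
      apply lset_mk. exists u. split; auto.
      replace (hmul u (hmul (lnum r) (lnum A))) with (hmul (lnum r) (hmul u (lnum A))) by ac HR.
      apply (IM HTi); auto.
  - intros X Y Hxy Hn.
    change (lset T (lmk S (hmul (lnum X) (lnum Y)) _ (mset_mul S _ _ (lden_in X) (lden_in Y)))) in Hxy.
    apply lset_mk in Hxy. destruct Hxy as [u [Su Tu]].
    assert (Hb : T (hmul (lnum X) (hmul u (lnum Y)))).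
    { replace (hmul (lnum X) (hmul u (lnum Y))) with (hmul u (hmul (lnum X) (lnum Y))) by ac HR. exact Tu. }
    destruct (classic (phi T (hmul (lnum X) (hmul u (lnum Y))))) as [Hp|Hp].
    + exfalso. apply Hn, Hsub.
      exists (hmul (lnum X) (hmul u (lnum Y))), (hmul u (hmul (lden X) (lden Y))).
      exists (mset_mul S _ _ Su (mset_mul S _ _ (lden_in X) (lden_in Y))).
      split; [exact Hp|].
      change (lmk S (hmul (lnum X) (lnum Y)) _ (mset_mul S _ _ (lden_in X) (lden_in Y))
        = lmk S (hmul (lnum X) (hmul u (lnum Y))) (hmul u (hmul (lden X) (lden Y)))
            (mset_mul S _ _ Su (mset_mul S _ _ (lden_in X) (lden_in Y)))).
      apply lmk_eq. exists hone. split. apply mset_one. ac HR.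
    + destruct (proj2 HT _ _ Hb Hp) as [Hx | [k [Hk Hyk]]].
      * left. apply lsetX. exists hone. split. apply mset_one. now rewrite (hmul_one HR).
      * right. exists k. split; auto. rewrite lpow. apply lset_mk.
        exists (hpow R u k). split. apply S_pow; auto.
        rewrite <- hpow_mul. exact Hyk.
Qed.
End Loc.

Theorem mainTheorem14 (R : hsig) (HR : is_krasner R)
  (phi : (R -> Prop) -> (R -> Prop)) (Hphi : phi_fun R phi)
  (T : R -> Prop) (HTp : proper R T) (HT : psi_primary R phi T) :
  (forall M : R -> Prop, hyperideal R M -> (forall x, M x -> T x) ->
     psi_primary (quot R M) (@phiM R M phi) (@qset R M T)) /\
  (forall S : mclosed R, (forall x, ~ (T x /\ S x)) ->
     (forall X, @lset R S (phi T) X -> @phiS R S phi (@lset R S T) X) ->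
     psi_primary (loc S) (@phiS R S phi) (@lset R S T)).
Proof.
  split.
  - intros M HM HMT. exact (part1 HR (proj1 HT) HM HMT HT).
  - intros S HTS Hsub. exact (part2 HR (proj1 HT) HT Hsub).
Qed.
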